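(* Assume conditions A and D' hold for the family of stochastic matrices $(p_{ij}(\varepsilon))_{i,j\in\mathbb{X}}$, $\varepsilon\in(0,\varepsilon_0]$. Then for every $r\in\mathbb{X}$ the non-absorption probability $\bar p_{rr}(\varepsilon)=1-p_{rr}(\varepsilon)$ admits a pivotal expansion with explicit power-type remainder bound: there exist integers $0\le\bar l^-_{rr}\le\bar l^+_{rr}$, real coefficients $\bar a_{rr}[l]$, $\bar l^-_{rr}\le l\le\bar l^+_{rr}$, with $\bar a_{rr}[\bar l^-_{rr}]\ne0$, and constants $\bar\delta_{rr}\in(0,1]$, $\bar G_{rr}\in(0,\infty)$, $\bar\varepsilon_{rr}\in(0,\varepsilon_0]$, such that $\big|\bar p_{rr}(\varepsilon)-\sum_{l=\bar l^-_{rr}}^{\bar l^+_{rr}}\bar a_{rr}[l]\varepsilon^l\big|\le\bar G_{rr}\varepsilon^{\bar l^+_{rr}+\bar\delta_{rr}}$ for $0<\varepsilon\le\bar\varepsilon_{rr}$.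
   Context: Let $\mathbb{X}=\{1,\dots,N\}$, $0<\varepsilon_0\le1$, and for each $\varepsilon\in(0,\varepsilon_0]$ let $(p_{ij}(\varepsilon))_{i,j\in\mathbb{X}}$ be a stochastic matrix (transition probabilities of a Markov chain). Condition A: there are nonempty sets $\mathbb{Y}_i\subseteq\mathbb{X}$, $i\in\mathbb{X}$, such that (a) $p_{ij}(\varepsilon)>0$ for $j\in\mathbb{Y}_i$, $i\in\mathbb{X}$, $\varepsilon\in(0,\varepsilon_0]$; (b) $p_{ij}(\varepsilon)=0$ for $j\notin\mathbb{Y}_i$, $i\in\mathbb{X}$, $\varepsilon\in(0,\varepsilon_0]$; (c) for every $i,j\in\mathbb{X}$ there exist $n\ge1$ and states $i=l_0,l_1,\dots,l_n=j$ with $l_m\in\mathbb{Y}_{l_{m-1}}$ for $m=1,\dots,n$. Condition D': for all $i\in\mathbb{X}$, $j\in\mathbb{Y}_i$, $p_{ij}(\varepsilon)=\sum_{l=l^-_{ij}}^{l^+_{ij}}a_{ij}[l]\varepsilon^l+o_{ij}(\varepsilon)$ for $\varepsilon\in(0,\varepsilon_0]$, where $0\le l^-_{ij}\le l^+_{ij}<\infty$ are integers, $a_{ij}[l^-_{ij}]>0$, and $|o_{ij}(\varepsilon)|\le G_{ij}\varepsilon^{l^+_{ij}+\delta_{ij}}$ for $0<\varepsilon\le\varepsilon_{ij}$, with $\delta_{ij}\in(0,1]$, $G_{ij}\in(0,\infty)$, $\varepsilon_{ij}\in(0,\varepsilon_0]$. *)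

(* Defs.v *)
(* concrete reals R. States X = {1..N} are encoded as 0..N-1. *)
From Stdlib Require Import Reals Lra Lia List.
Open Scope R_scope.

Definition fsum (N : nat) (f : nat -> R) : R :=
  fold_right Rplus 0 (map f (seq 0 N)).

Definition psum (a : nat -> R) (lm lp : nat) (eps : R) : R :=
  fold_right Rplus 0 (map (fun l => a l * eps ^ l) (seq lm (S (lp - lm)))).

Definition stochastic_family (N : nat) (eps0 : R) (p : R -> nat -> nat -> R) : Prop :=
  forall eps, 0 < eps <= eps0 ->
    (forall i j, (i < N)%nat -> (j < N)%nat -> 0 <= p eps i j) /\
    (forall i, (i < N)%nat -> fsum N (fun j => p eps i j) = 1).

(* Condition A, with Y i j meaning j \in Y_i *)
Definition condition_A (N : nat) (eps0 : R) (p : R -> nat -> nat -> R)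
  (Y : nat -> nat -> Prop) : Prop :=
  (forall i j, (i < N)%nat -> Y i j -> (j < N)%nat) /\
  (forall i, (i < N)%nat -> exists j, Y i j) /\
  (forall eps i j, 0 < eps <= eps0 -> (i < N)%nat -> Y i j -> p eps i j > 0) /\
  (forall eps i j, 0 < eps <= eps0 -> (i < N)%nat -> (j < N)%nat -> ~ Y i j ->
     p eps i j = 0) /\
  (forall i j, (i < N)%nat -> (j < N)%nat ->
     exists (n : nat) (l : nat -> nat), (1 <= n)%nat /\ l 0%nat = i /\ l n = j /\
       forall m, (1 <= m <= n)%nat -> Y (l (m - 1)%nat) (l m)).

Definition condition_D' (N : nat) (eps0 : R) (p : R -> nat -> nat -> R)
  (Y : nat -> nat -> Prop) : Prop :=
  forall i j, (i < N)%nat -> Y i j ->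
    exists (lm lp : nat) (a : nat -> R) (delta G e : R),
      (lm <= lp)%nat /\ a lm > 0 /\
      0 < delta <= 1 /\ 0 < G /\ 0 < e <= eps0 /\
      forall eps, 0 < eps <= e ->
        Rabs (p eps i j - psum a lm lp eps) <= G * Rpower eps (INR lp + delta).

(* Main.v *)
Require Import Defs.
From Stdlib Require Import Reals.
From Stdlib Require Import Lra Lia List Classical Arith.
Open Scope R_scope.

Lemma Rpow_dec x a b : 0 < x <= 1 -> a <= b -> Rpower x b <= Rpower x a.
Proof.
  intros Hx Hab. unfold Rpower.
  assert (Hl : ln x <= 0).
  { destruct (Req_dec x 1) as [E|E].
    - subst; rewrite ln_1; lra.
    - rewrite <- ln_1; left; apply ln_increasing; lra. }
  assert (b * ln x <= a * ln x) by nra.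
  destruct (Rle_lt_or_eq_dec _ _ H) as [H1|H1].
  - left; apply exp_increasing; exact H1.
  - rewrite H1; lra.
Qed.

Lemma Rpower_pos x a : 0 < Rpower x a.
Proof. unfold Rpower; apply exp_pos. Qed.

Lemma pow_dec x m l : 0 < x <= 1 -> (m <= l)%nat -> x ^ l <= x ^ m.
Proof.
  intros Hx Hml. rewrite <- !Rpower_pow by lra.
  apply Rpow_dec; [lra| apply le_INR; exact Hml].
Qed.

Definition Qf (eps0 : R) (f : R -> R) (L : nat) (c : R) : Prop :=
  exists d G e, 0 < d <= 1 /\ 0 < G /\ 0 < e <= eps0 /\
    forall eps, 0 < eps <= e -> Rabs (f eps - c * eps ^ L) <= G * Rpower eps (INR L + d).

Lemma Q_add eps0 f1 f2 L c1 c2 : eps0 <= 1 -> Qf eps0 f1 L c1 -> Qf eps0 f2 L c2 ->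
  Qf eps0 (fun e => f1 e + f2 e) L (c1 + c2).
Proof.
  intros He0 [d1 [G1 [e1 [Hd1 [HG1 [He1 H1]]]]]] [d2 [G2 [e2 [Hd2 [HG2 [He2 H2]]]]]].
  exists (Rmin d1 d2), (G1 + G2), (Rmin e1 e2).
  assert (Rmin d1 d2 <= d1) by apply Rmin_l.
  assert (Rmin d1 d2 <= d2) by apply Rmin_r.
  assert (0 < Rmin d1 d2) by (apply Rmin_glb_lt; lra).
  assert (Rmin e1 e2 <= e1) by apply Rmin_l.
  assert (Rmin e1 e2 <= e2) by apply Rmin_r.
  assert (0 < Rmin e1 e2) by (apply Rmin_glb_lt; lra).
  split; [lra|]. split; [lra|]. split; [lra|].
  intros eps Heps.
  specialize (H1 eps ltac:(lra)). specialize (H2 eps ltac:(lra)).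
  assert (A1 : Rpower eps (INR L + d1) <= Rpower eps (INR L + Rmin d1 d2))
    by (apply Rpow_dec; lra).
  assert (A2 : Rpower eps (INR L + d2) <= Rpower eps (INR L + Rmin d1 d2))
    by (apply Rpow_dec; lra).
  replace (f1 eps + f2 eps - (c1 + c2) * eps ^ L) with
    ((f1 eps - c1 * eps ^ L) + (f2 eps - c2 * eps ^ L)) by ring.
  eapply Rle_trans; [apply Rabs_triang|].
  assert (G1 * Rpower eps (INR L + d1) <= G1 * Rpower eps (INR L + Rmin d1 d2))
    by (apply Rmult_le_compat_l; lra).
  assert (G2 * Rpower eps (INR L + d2) <= G2 * Rpower eps (INR L + Rmin d1 d2))
    by (apply Rmult_le_compat_l; lra).
  lra.
Qed.

Lemma Q_zero eps0 f L : 0 < eps0 -> (forall eps, 0 < eps <= eps0 -> f eps = 0) -> Qf eps0 f L 0.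
Proof.
  intros He0 Hf. exists 1, 1, eps0. split; [lra|]. split; [lra|]. split; [lra|].
  intros eps Heps. rewrite Hf by lra. rewrite Rmult_0_l, Rminus_0_r, Rabs_R0.
  pose proof (Rpower_pos eps (INR L + 1)); lra.
Qed.

Lemma Q_ext eps0 f g L c : Qf eps0 f L c -> (forall eps, 0 < eps <= eps0 -> f eps = g eps) ->
  Qf eps0 g L c.
Proof.
  intros [d [G [e [Hd [HG [He H]]]]]] Hfg. exists d, G, e.
  split; [lra|]. split; [lra|]. split; [lra|].
  intros eps Heps. rewrite <- Hfg by lra. apply H; lra.
Qed.

Lemma abs_sum_nonneg (a : nat -> R) s : 0 <= fold_right Rplus 0 (map (fun l => Rabs (a l)) s).
Proof.
  induction s; simpl; [lra|]. pose proof (Rabs_pos (a a0)); lra.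
Qed.

Lemma list_bound (a : nat -> R) eps m s : 0 < eps <= 1 -> Forall (fun l => (m <= l)%nat) s ->
  Rabs (fold_right Rplus 0 (map (fun l => a l * eps ^ l) s)) <=
  fold_right Rplus 0 (map (fun l => Rabs (a l)) s) * eps ^ m.
Proof.
  intros He HF. induction HF; simpl.
  - rewrite Rabs_R0; lra.
  - eapply Rle_trans; [apply Rabs_triang|].
    rewrite Rabs_mult, (Rabs_pos_eq (eps ^ x)) by (apply pow_le; lra).
    assert (Rabs (a x) * eps ^ x <= Rabs (a x) * eps ^ m).
    { apply Rmult_le_compat_l; [apply Rabs_pos| apply pow_dec; auto]. }
    rewrite Rmult_plus_distr_r. lra.
Qed.

Lemma seq_ge k n : Forall (fun l => (k <= l)%nat) (seq k n).
Proof.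
  apply Forall_forall. intros x Hx. apply in_seq in Hx. lia.
Qed.

Lemma term_lemma eps0 (f : R -> R) L lm lp a delta G e :
  0 < eps0 <= 1 -> (L <= lm)%nat -> (lm <= lp)%nat -> a lm > 0 ->
  0 < delta <= 1 -> 0 < G -> 0 < e <= eps0 ->
  (forall eps, 0 < eps <= e -> Rabs (f eps - psum a lm lp eps) <= G * Rpower eps (INR lp + delta)) ->
  exists c, Qf eps0 f L c /\ 0 <= c /\ (lm = L -> 0 < c).
Proof.
  intros He0 HL Hlp Ha Hd HG He H.
  assert (Hp1 : forall eps, 0 < eps <= e ->
    Rpower eps (INR lp + delta) <= Rpower eps (INR L + delta)).
  { intros eps Heps. apply Rpow_dec; [lra|]. apply le_INR in HL. apply le_INR in Hlp. lra. }
  assert (Hp2 : forall eps, 0 < eps <= e -> eps ^ S L <= Rpower eps (INR L + delta)).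
  { intros eps Heps. rewrite <- Rpower_pow by lra. apply Rpow_dec; [lra|].
    rewrite S_INR. lra. }
  destruct (Nat.eq_dec lm L) as [E|E].
  - subst lm. exists (a L). split; [|split; lra].
    set (S0 := fold_right Rplus 0 (map (fun l => Rabs (a l)) (seq (S L) (lp - L)))).
    assert (HS0 : 0 <= S0) by apply abs_sum_nonneg.
    exists delta, (G + S0), e. split; [lra|]. split; [lra|]. split; [lra|].
    intros eps Heps.
    set (T := fold_right Rplus 0 (map (fun l => a l * eps ^ l) (seq (S L) (lp - L)))).
    assert (Hps : psum a L lp eps = a L * eps ^ L + T).
    { unfold psum, T. simpl. reflexivity. }
    assert (HT : Rabs T <= S0 * eps ^ S L).
    { apply list_bound; [lra| apply seq_ge]. }
    specialize (H eps Heps). rewrite Hps in H.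
    replace (f eps - a L * eps ^ L) with ((f eps - (a L * eps ^ L + T)) + T) by ring.
    eapply Rle_trans; [apply Rabs_triang|].
    specialize (Hp1 eps Heps). specialize (Hp2 eps Heps).
    assert (G * Rpower eps (INR lp + delta) <= G * Rpower eps (INR L + delta))
      by (apply Rmult_le_compat_l; lra).
    assert (S0 * eps ^ S L <= S0 * Rpower eps (INR L + delta))
      by (apply Rmult_le_compat_l; lra).
    lra.
  - exists 0. split; [|split; [lra| intro; contradiction]].
    set (S0 := fold_right Rplus 0 (map (fun l => Rabs (a l)) (seq lm (S (lp - lm))))).
    assert (HS0 : 0 <= S0) by apply abs_sum_nonneg.
    exists delta, (G + S0), e. split; [lra|]. split; [lra|]. split; [lra|].
    intros eps Heps.
    assert (HT : Rabs (psum a lm lp eps) <= S0 * eps ^ S L).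
    { unfold psum. apply list_bound; [lra|].
      apply Forall_forall. intros x Hx. apply in_seq in Hx. lia. }
    specialize (H eps Heps).
    replace (f eps - 0 * eps ^ L) with ((f eps - psum a lm lp eps) + psum a lm lp eps) by ring.
    eapply Rle_trans; [apply Rabs_triang|].
    specialize (Hp1 eps Heps). specialize (Hp2 eps Heps).
    assert (G * Rpower eps (INR lp + delta) <= G * Rpower eps (INR L + delta))
      by (apply Rmult_le_compat_l; lra).
    assert (S0 * eps ^ S L <= S0 * Rpower eps (INR L + delta))
      by (apply Rmult_le_compat_l; lra).
    lra.
Qed.

Fixpoint sumn (n : nat) (f : nat -> R) : R :=
  match n with O => 0 | S n => sumn n f + f n end.

Lemma fsum_sumn N f : fsum N f = sumn N f.
Proof.
  unfold fsum. induction N; [reflexivity|].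
  rewrite seq_S, map_app, fold_right_app. simpl.
  rewrite <- IHN.
  assert (forall l x, fold_right Rplus x l = fold_right Rplus 0 l + x).
  { induction l; intros; simpl; [ring| rewrite IHl; ring]. }
  rewrite H. ring.
Qed.

Lemma sum_split (h : nat -> R) r n :
  sumn n h = sumn n (fun j => if Nat.eqb j r then 0 else h j) +
             (if Nat.ltb r n then h r else 0).
Proof.
  induction n; simpl; [ring|].
  rewrite IHn.
  destruct (Nat.eqb_spec n r); destruct (Nat.ltb_spec r n); destruct (Nat.ltb_spec r (S n));
    try lia; subst; ring.
Qed.

Lemma min_ex (P : nat -> Prop) : (exists n, P n) -> exists n, P n /\ forall m, P m -> (n <= m)%nat.
Proof.
  intros [n Hn].
  destruct (classic (exists n, P n /\ forall m, P m -> (n <= m)%nat)) as [H|H]; [exact H|].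
  exfalso.
  assert (Hk : forall k i, (i < k)%nat -> ~ P i).
  { induction k; intros i Hi Pi; [lia|].
    destruct (Nat.eq_dec i k) as [->|Ne].
    - apply H. exists k. split; [exact Pi|]. intros m Pm.
      destruct (le_lt_dec k m); [assumption|]. exfalso; exact (IHk m l Pm).
    - exact (IHk i ltac:(lia) Pi). }
  exact (Hk (S n) n ltac:(lia) Hn).
Qed.

Lemma first_exit (l : nat -> nat) r k : l 0%nat = r -> l k <> r ->
  exists m, (1 <= m <= k)%nat /\ l (m - 1)%nat = r /\ l m <> r.
Proof.
  intros H0. induction k; intros Hk; [congruence|].
  destruct (Nat.eq_dec (l k) r) as [E|E].
  - exists (S k). split; [lia|]. split; [replace (S k - 1)%nat with k by lia; exact E| exact Hk].
  - destruct (IHk E) as [m [Hm1 Hm2]]. exists m. split; [lia| exact Hm2].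
Qed.

Theorem lemma5 (N : nat) (eps0 : R) (p : R -> nat -> nat -> R) (Y : nat -> nat -> Prop) :
  (2 <= N)%nat ->
  0 < eps0 <= 1 ->
  stochastic_family N eps0 p ->
  condition_A N eps0 p Y ->
  condition_D' N eps0 p Y ->
  forall r, (r < N)%nat ->
    exists (lm lp : nat) (abar : nat -> R) (delta G e : R),
      (lm <= lp)%nat /\ abar lm <> 0 /\
      0 < delta <= 1 /\ 0 < G /\ 0 < e <= eps0 /\
      forall eps, 0 < eps <= e ->
        Rabs ((1 - p eps r r) - psum abar lm lp eps) <= G * Rpower eps (INR lp + delta).
Proof.
  intros HN He0 Hst [A1 [A2 [A3 [A4 A5]]]] HD r Hr.
  assert (Hj0 : exists j0, (j0 < N)%nat /\ j0 <> r /\ Y r j0).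
  { set (j := if Nat.eqb r 0 then 1%nat else 0%nat).
    assert (Hj : (j < N)%nat /\ j <> r).
    { unfold j; destruct (Nat.eqb_spec r 0); lia. }
    destruct (A5 r j Hr (proj1 Hj)) as [n [l [Hn [Hl0 [Hln Hpath]]]]].
    destruct (first_exit l r n Hl0 ltac:(rewrite Hln; apply Hj)) as [m [Hm [Hm1 Hm2]]].
    exists (l m). specialize (Hpath m Hm). rewrite Hm1 in Hpath.
    split; [apply (A1 r); assumption|]. split; assumption. }
  destruct Hj0 as [j1 [Hj1N [Hj1r HYj1]]].
  set (P := fun L => exists j lp a delta G e, (j < N)%nat /\ j <> r /\ Y r j /\
      (L <= lp)%nat /\ a L > 0 /\ 0 < delta <= 1 /\ 0 < G /\ 0 < e <= eps0 /\
      forall eps, 0 < eps <= e ->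
        Rabs (p eps r j - psum a L lp eps) <= G * Rpower eps (INR lp + delta)).
  assert (HPex : exists L, P L).
  { destruct (HD r j1 Hr HYj1) as [lm [lp [a [d [G [e Hx]]]]]].
    exists lm, j1, lp, a, d, G, e. tauto. }
  destruct (min_ex P HPex) as [L [HPL HLmin]].
  destruct HPL as [j0 [lp0 [a0 [d0 [G0 [e0 [Hj0N [Hj0r [HYj0 [Hlp0 [Ha0 [Hd0 [HG0 [He0' Hb0]]]]]]]]]]]]]].
  set (g := fun j eps => if Nat.eqb j r then 0 else p eps r j).
  assert (Hind : forall n, (n <= N)%nat -> exists c, Qf eps0 (fun eps => sumn n (fun j => g j eps)) L c /\
            0 <= c /\ ((j0 < n)%nat -> 0 < c)).
  { induction n; intros HnN'.
    - exists 0. split; [apply Q_zero; [lra| reflexivity]|]. split; [lra| lia].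
    - destruct (IHn ltac:(lia)) as [c [Qc [Hc0 Hc1]]].
      assert (Ht : exists cn, Qf eps0 (g n) L cn /\ 0 <= cn /\ (n = j0 -> 0 < cn)).
      { destruct (Nat.eq_dec n r) as [Enr|Enr].
        - exists 0. split; [apply Q_zero; [lra|]|split; [lra|intro; lia]].
          intros eps _. unfold g. rewrite Enr, Nat.eqb_refl. reflexivity.
        - destruct (Nat.eq_dec n j0) as [Enj|Enj].
          + subst n.
            destruct (term_lemma eps0 (fun eps => p eps r j0) L L lp0 a0 d0 G0 e0
                        He0 (le_n L) Hlp0 Ha0 Hd0 HG0 He0' Hb0) as [cn [Q1 [Q2 Q3]]].
            exists cn. split; [|split; [exact Q2| intros _; apply Q3; reflexivity]].
            apply (Q_ext _ _ _ _ _ Q1). intros eps _. unfold g.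
            destruct (Nat.eqb_spec j0 r); [lia| reflexivity].
          + destruct (classic (Y r n)) as [HY|HY].
            * assert (HnN : (n < N)%nat) by (apply (A1 r); assumption).
              destruct (HD r n Hr HY) as [lm [lp [a [d [G [e [Hl [Ha [Hd [HG [He Hb]]]]]]]]]]].
              assert (HLl : (L <= lm)%nat).
              { apply HLmin. exists n, lp, a, d, G, e. tauto. }
              destruct (term_lemma eps0 (fun eps => p eps r n) L lm lp a d G e
                          He0 HLl Hl Ha Hd HG He Hb) as [cn [Q1 [Q2 Q3]]].
              exists cn. split; [|split; [exact Q2| intro; lia]].
              apply (Q_ext _ _ _ _ _ Q1). intros eps _. unfold g.
              destruct (Nat.eqb_spec n r); [lia| reflexivity].
            * exists 0. split; [apply Q_zero; [lra|]|split; [lra|intro; lia]].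
              intros eps Heps. unfold g. destruct (Nat.eqb_spec n r); [reflexivity|].
              apply A4; auto; lia. }
      destruct Ht as [cn [Qn [Hn0 Hn1]]].
      exists (c + cn). split.
      + apply (Q_ext _ _ _ _ _ (Q_add _ _ _ _ _ _ (proj2 He0) Qc Qn)).
        intros eps _. reflexivity.
      + split; [lra|]. intros Hlt. destruct (Nat.eq_dec n j0) as [->|E].
        * specialize (Hn1 eq_refl). lra.
        * specialize (Hc1 ltac:(lia)). lra. }
  destruct (Hind N (le_n N)) as [c [[d [G [e [Hd [HG [He Hb]]]]]] [Hc0 Hc1]]].
  exists L, L, (fun _ => c), d, G, e.
  split; [lia|]. split; [specialize (Hc1 Hj0N); lra|].
  split; [lra|]. split; [lra|]. split; [lra|].
  intros eps Heps.
  assert (Hps : psum (fun _ => c) L L eps = c * eps ^ L).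
  { unfold psum. rewrite Nat.sub_diag. simpl. ring. }
  assert (Hsum : 1 - p eps r r = sumn N (fun j => g j eps)).
  { destruct (Hst eps ltac:(lra)) as [_ Hs]. specialize (Hs r Hr). rewrite fsum_sumn in Hs.
    rewrite (sum_split (fun j => p eps r j) r N) in Hs.
    destruct (Nat.ltb_spec r N); [|lia]. unfold g. lra. }
  rewrite Hps, Hsum. apply Hb; exact Heps.
Qed.
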